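(* Assume we are either in the $\delta$-algebraic setting or in the $\delta$-arithmetic setting. Let $f:R^{\times}\rightarrow R$ be a $\delta$-map and $s\neq 0$ an integer such that for all $a_1,a_2\in R^{\times}$, $$f(a_1a_2)=f(a_1)+a_1^sf(a_2).$$ Then there exists $\mu\in R$ such that $f(a)=\mu(1-a^s)$ for all $a\in R^{\times}$.
   Context: $\delta$-arithmetic setting: $p$ is an odd prime, $R$ is the complete discrete valuation ring with maximal ideal $pR$ and residue field $\mathbb{F}_p^a$; $\phi:R\to R$ is the unique ring endomorphism lifting Frobenius, and $\delta x=(\phi(x)-x^p)/p$. Here a $\delta$-map $R^{\times}\to R$ is a map of the form $a\mapsto F(a,\delta a,\dots,\delta^m a)$ with $F\in R[x,x^{-1},x',\dots,x^{(m)}]\hat{\ }$ (restricted power series, $\hat{\ }$ = $p$-adic completion). $\delta$-algebraic setting: $R$ is a field of characteristic zero with a derivation $\delta$, $\delta$-closed in Kolchin's sense; a $\delta$-map $R^{\times}\to R$ is a map $a\mapsto F(a,\delta a,\dots,\delta^m a)$ with $F$ a polynomial in $R[x,x^{-1},x',\dots,x^{(m)}]$. *)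

(* Defs.v *)
From HB Require Import structures.
From mathcomp Require Import all_boot all_order all_algebra.
Set Implicit Arguments. Unset Strict Implicit. Unset Printing Implicit Defensive.
Import Order.TTheory GRing.Theory Num.Theory.
Local Open Scope ring_scope.

Definition in_pow_ideal {R : pzRingType} (p k : nat) (x : R) : Prop :=
  exists y : R, x = (p%:R) ^+ k * y.

(* exponents of monomials x^{e0} (x')^{e1} ... (x^{(m)})^{em}, e0 : int *)
Notation dexp m := (int * m.-tuple nat)%type.

Definition dmono {R : comUnitRingType} (d : R -> R) (m : nat) (al : dexp m)
    (a : R) : R :=
  a ^ al.1 * \prod_(i < m) (iter i.+1 d a) ^+ (tnth al.2 i).

(* R is a complete DVR with maximal ideal pR (p odd prime) and residue field
   an algebraic closure of F_p; phi is a ring endomorphism lifting Frobenius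
   and delta x = (phi x - x^p)/p. *)
Definition arith_setting (R : idomainType) (p : nat)
    (phi : {rmorphism R -> R}) (delta : R -> R) : Prop :=
  prime p /\ odd p /\
  (* DVR with uniformizer p *)
  (p%:R : R) != 0 /\ (p%:R : R) \isn't a GRing.unit /\
  (forall x : R, x != 0 ->
     exists (k : nat) (u : R), u \is a GRing.unit /\ x = p%:R ^+ k * u) /\
  (* p-adic completeness *)
  (forall x : nat -> R, (forall n, in_pow_ideal p n (x n.+1 - x n)) ->
     exists l : R, forall n, in_pow_ideal p n (l - x n)) /\
  (* residue field R/pR is algebraic over F_p ... *)
  (forall x : R, exists n : nat, (0 < n)%N /\ in_pow_ideal p 1 (x ^+ (p ^ n) - x)) /\
  (* ... and algebraically closed *)
  (forall P : {poly R}, P \is monic -> (1 < size P)%N ->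
     exists x : R, in_pow_ideal p 1 P.[x]) /\
  (forall x : R, in_pow_ideal p 1 (phi x - x ^+ p)) /\
  (forall x : R, p%:R * delta x = phi x - x ^+ p).

(* f is a delta-map: a |-> F(a, delta a, ..., delta^m a) with F a restricted
   power series in R[x, x^-1, x', ..., x^(m)]^ ; F is given by its coefficient
   family c (tending to 0 p-adically), and F(a, ...) is the p-adic sum. *)
Definition arith_dmap (R : comUnitRingType) (p : nat) (delta : R -> R)
    (f : R -> R) : Prop :=
  exists (m : nat) (c : dexp m -> R),
    (forall k : nat, exists S : seq (dexp m),
        forall al, al \notin S -> in_pow_ideal p k (c al)) /\
    (forall a : R, a \is a GRing.unit -> forall k : nat,
       exists S : seq (dexp m), forall T : seq (dexp m), uniq T -> {subset S <= T} ->
         in_pow_ideal p k (f a - \sum_(al <- T) c al * dmono delta al a)).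

Definition derivation (K : pzRingType) (d : K -> K) : Prop :=
  (forall x y, d (x + y) = d x + d y) /\
  (forall x y, d (x * y) = x * d y + y * d x).

(* differential polynomial in n unknowns y_0..y_{n-1}, of order <= N, with
   coefficients in K: finite sum of c * prod_{i,j} (delta^j y_i)^{e(i,j)} *)
Notation dpoly K n N := (seq (K * {ffun 'I_n * 'I_N.+1 -> nat}))%type.

Definition dpeval (K L : fieldType) (iota : K -> L) (dL : L -> L) (n N : nat)
    (P : dpoly K n N) (y : 'I_n -> L) : L :=
  \sum_(t <- P) iota t.1 *
     \prod_(v : 'I_n * 'I_N.+1) (iter v.2 dL (y v.1)) ^+ (t.2 v).

(* Kolchin: every finite system of algebraic differential equations over K
   having a solution in some differential field extension of K has a solution
   in K. *)
Definition kolchin_closed (K : fieldType) (d : K -> K) : Prop :=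
  forall (n N : nat) (sys : seq (dpoly K n N)),
    (exists (L : fieldType) (dL : L -> L) (iota : {rmorphism K -> L}),
        derivation dL /\ (forall x, dL (iota x) = iota (d x)) /\
        exists y : 'I_n -> L, forall P, P \in sys -> dpeval iota dL P y = 0) ->
    exists y : 'I_n -> K, forall P, P \in sys -> dpeval id d P y = 0.

(* f is a delta-map given by a polynomial F in K[x, x^-1, x', ..., x^(m)] *)
Definition alg_dmap (K : fieldType) (d : K -> K) (f : K -> K) : Prop :=
  exists (m : nat) (F : seq (K * dexp m)),
    forall a : K, a \is a GRing.unit ->
      f a = \sum_(t <- F) t.1 * dmono d t.2 a.

(* Main.v *)
Require Import Defs.
From HB Require Import structures.
From mathcomp Require Import all_boot all_order all_algebra.
From mathcomp Require Import ring.
Import Order.TTheory GRing.Theory Num.Theory.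
Local Open Scope ring_scope.

Lemma key (R : comUnitRingType) (f : R -> R) (s : int) (b : R) :
  b \is a GRing.unit -> (1 - b ^ s) \is a GRing.unit ->
  (forall a1 a2 : R, a1 \is a GRing.unit -> a2 \is a GRing.unit ->
        f (a1 * a2) = f a1 + a1 ^ s * f a2) ->
  exists mu : R, forall a : R, a \is a GRing.unit -> f a = mu * (1 - a ^ s).
Proof.
move=> bu cu Hf; exists (f b / (1 - b ^ s)) => a au.
have E : f a * (1 - b ^ s) = f b * (1 - a ^ s).
  have := Hf a b au bu; rewrite mulrC Hf // => E.
  apply/eqP; rewrite -subr_eq0.
  have -> : f a * (1 - b ^ s) - f b * (1 - a ^ s) =
     (f a + a ^ s * f b) - (f b + b ^ s * f a) by ring.
  by rewrite E subrr.
by rewrite mulrAC -E mulrK.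
Qed.

Lemma pow_int (s : int) : s != 0 ->
  exists m : nat, (0 < m)%N /\ (forall (R : unitRingType) (x : R),
     x ^ s = x ^+ m \/ x ^ s = (x ^+ m)^-1).
Proof.
case: s => [n|n] hs.
- exists n; split; last by left.
  by rewrite lt0n; apply: contraNneq hs => ->.
- by exists n.+1; split => // R x; right.
Qed.

Section Arith.
Variables (R : idomainType) (p : nat) (phi : {rmorphism R -> R}) (delta : R -> R).
Hypothesis H : arith_setting p phi delta.
Local Notation I := (@in_pow_ideal R p 1).

Lemma I_def x : I x <-> exists y, x = p%:R * y.
Proof. by rewrite /in_pow_ideal expr1. Qed.

Lemma nI1 : ~ I 1.
Proof.
case/I_def=> y hy; case: H => _ [_ [_ [pu _]]].
by move/negP: pu; apply; apply/unitrPr; exists y.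
Qed.

Lemma nI2 : ~ I 2.
Proof.
case/I_def=> y hy; apply: nI1; apply/I_def.
case: H => _ [op _].
have hp : p%:R = 1 + 2 * (p./2)%:R :> R.
  by rewrite -[in LHS](odd_double_half p) op natrD -muln2 natrM mulrC.
exists (1 - y * (p./2)%:R).
by rewrite mulrBr mulr1 mulrA -hy -[X in X = _](addrK (2 * (p./2)%:R)) -hp.
Qed.

Lemma unit_of x : ~ I x -> x \is a GRing.unit.
Proof.
move=> nx; have x0 : x != 0.
  by apply: contra_notN nx => /eqP ->; apply/I_def; exists 0; rewrite mulr0.
case: H => _ [_ [_ [_ [dvr _]]]].
have [[|k] [u [uu xe]]] := dvr x x0; first by rewrite xe expr0 mul1r.
exfalso; apply: nx; apply/I_def; exists (p%:R ^+ k * u).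
by rewrite xe exprS mulrA.
Qed.

Lemma arith_b (s : int) : s != 0 ->
  exists b : R, b \is a GRing.unit /\ (1 - b ^ s) \is a GRing.unit.
Proof.
move=> s0; have [m [m0 hm]] := pow_int s s0.
have m20 : (0 < (m * 2))%N by rewrite muln_gt0 m0.
have [x hx] : exists x : R, I (x ^+ (m * 2) + 1).
  case: H => _ [_ [_ [_ [_ [_ [_ [cl _]]]]]]].
  pose P : {poly R} := 'X^(m * 2) + 1%:P.
  have sz : (1 < size P)%N by rewrite /P size_XnaddC.
  have [x hx] := cl P (monicXnaddC 1 m20) sz.
    by exists x; move: hx; rewrite /P !hornerE.
move: hx => /I_def [t ht].
have xu : x \is a GRing.unit.
  apply: unit_of => /I_def [y hy]; apply: nI1; apply/I_def.
  have e : x ^+ (m * 2) = x * x ^+ (m * 2).-1 by rewrite -exprS prednK.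
  exists (t - y * x ^+ (m * 2).-1).
  by rewrite mulrBr -ht mulrA -hy -e addrAC subrr add0r.
exists x; split => //; apply: unit_of => /I_def [z hz].
have [w hw] : exists w, x ^+ m - 1 = p%:R * w.
  have [e|e] := hm R x.
  - by exists (- z); rewrite mulrN -hz e opprB.
  - have yu : x ^+ m \is a GRing.unit by rewrite unitrX.
    exists (z * x ^+ m); by rewrite mulrA -hz e mulrBl mul1r mulVr.
have := nI2; apply; apply/I_def; exists (t - w * (x ^+ m + 1)).
have e2 : x ^+ (m * 2) = x ^+ m * x ^+ m by rewrite exprM expr2.
rewrite mulrBr -ht mulrA -hw e2; ring.
Qed.
End Arith.

Lemma field_b (K : fieldType) (s : int) : [pchar K] =i pred0 -> s != 0 ->
  exists b : K, b \is a GRing.unit /\ (1 - b ^ s) \is a GRing.unit.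
Proof.
move=> ch s0; have hc := (pcharf0P K).1 ch.
have [m [m0 hm]] := pow_int s s0.
exists 2; rewrite !unitfE; split; first by rewrite hc.
rewrite subr_eq0 eq_sym; apply/negP => /eqP e.
have e1 : (2 : K) ^+ m = 1.
  by have [e'|e'] := hm K 2; [rewrite -e' | apply/eqP; rewrite -invr_eq1 -e' e].
have : ((2 ^ m - 1)%N%:R : K) == 0.
  by rewrite natrB ?expn_gt0 // natrX e1 subrr.
rewrite hc subn_eq0 leqNgt.
by rewrite -[X in (X < _)%N](expn0 2) ltn_exp2l // m0.
Qed.

Theorem lemma3p5 :
  (forall (R : idomainType) (p : nat) (phi : {rmorphism R -> R})
          (delta : R -> R) (f : R -> R) (s : int),
     arith_setting p phi delta -> arith_dmap p delta f -> s != 0 ->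
     (forall a1 a2 : R, a1 \is a GRing.unit -> a2 \is a GRing.unit ->
        f (a1 * a2) = f a1 + a1 ^ s * f a2) ->
     exists mu : R, forall a : R, a \is a GRing.unit -> f a = mu * (1 - a ^ s))
  /\
  (forall (K : fieldType) (d : K -> K) (f : K -> K) (s : int),
     [pchar K] =i pred0 -> derivation d -> kolchin_closed d ->
     alg_dmap d f -> s != 0 ->
     (forall a1 a2 : K, a1 \is a GRing.unit -> a2 \is a GRing.unit ->
        f (a1 * a2) = f a1 + a1 ^ s * f a2) ->
     exists mu : K, forall a : K, a \is a GRing.unit -> f a = mu * (1 - a ^ s)).
Proof.
split.
- move=> R p phi delta f s H _ s0 Hf.
  have [b [bu cu]] := @arith_b R p phi delta H s s0.
  exact: key bu cu Hf.
- move=> K d f s ch _ _ _ s0 Hf.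
  have [b [bu cu]] := @field_b K s ch s0.
  exact: key bu cu Hf.
Qed.
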